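(* Let $G$ be a fullerene graph, $S$ a perfect star packing of $G$, and $C=v_0v_1\cdots v_{k-1}v_0$ a cycle in $G-C(S)$ which is a non-facial cycle of $G$, dividing $G$ into the two sides $H_1$ and $H_2$ (indices modulo $k$). Then: (i) if $v_i$ and $v_{i+1}$ both have neighbors in $H_1$ (resp. $H_2$) and $v_{i-1}$ and $v_{i+2}$ both have neighbors in $H_2$ (resp. $H_1$), then $v_{i-1},v_i,v_{i+1},v_{i+2}$ lie on a pentagonal face of $G$; (ii) if $v_i,v_{i+1},v_{i+2}$ all have neighbors in $H_1$ (resp. $H_2$) and $v_{i-1}$ and $v_{i+3}$ both have neighbors in $H_2$ (resp. $H_1$), then $v_{i-1},v_i,v_{i+1},v_{i+2},v_{i+3}$ lie on a hexagonal face of $G$; (iii) for $j\in\{1,2\}$, if $v_i$ and $v_{i+1}$ both have neighbors in $H_j$, and $e_i,e_{i+1}$ denote the edges incident to $v_i$, $v_{i+1}$ respectively that do not lie on $C$, then the face of $G$ whose boundary contains both $e_i$ and $e_{i+1}$ is a hexagon, and two antipodal vertices of this hexagon are centers of stars of $S$.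
   Context: A fullerene graph is a finite simple connected (equivalently, $3$-connected) plane cubic graph all of whose faces are pentagons or hexagons; it has an essentially unique plane embedding. A perfect star packing of $G$ is a spanning subgraph $S$ of $G$ every connected component of which is isomorphic to $K_{1,3}$; $C(S)$ denotes the set of centers (degree-$3$ vertices) of the stars in $S$. A cycle of $G$ is facial if it bounds a face, non-facial otherwise. A non-facial cycle $C$, as a Jordan curve in the plane embedding, separates the plane into two regions; $H_1$ and $H_2$ denote the subgraphs of $G$ induced by the vertices lying in the interior of each of these regions (the two sides of $C$). Two vertices of a hexagon are antipodal if they are at distance $3$ along the hexagon. *)

(* Defs.v *)
From mathcomp Require Import all_boot.

Set Implicit Arguments. Unset Strict Implicit. Unset Printing Implicit Defensive.

Section Fullerene.
Variable T : finType.
Variable adj : rel T.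
Variable rot : T -> T -> T.    (* rot v u = successor of neighbour u in the cyclic
                                  order of the neighbours around v (rotation system) *)

Definition darts : {set T * T} := [set d | adj d.1 d.2].

Definition faceperm (d : T * T) : T * T := (d.2, rot d.2 d.1).

(* the face (as its cyclic set of boundary darts) containing dart d *)
Definition face_of (d : T * T) : {set T * T} := [set e | fconnect faceperm d e].

Definition faces : {set {set T * T}} := [set face_of d | d in darts].

Definition face_verts (d : T * T) : {set T} := [set e.1 | e in face_of d].

Definition face_edges (d : T * T) : {set {set T}} :=
  [set [set e.1; e.2] | e in face_of d].

Definition face_has_edge (d : T * T) (x y : T) : bool :=
  ((x, y) \in face_of d) || ((y, x) \in face_of d).

Definition is_rotation_system : Prop :=
  [/\ forall x u, adj x u -> adj x (rot x u),
      forall x u w, adj x u -> adj x w -> rot x u = rot x w -> u = w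
    & forall x u w, adj x u -> adj x w -> exists n, iter n (rot x) u = w].

(* A fullerene graph with its (essentially unique) plane embedding, given by a
   rotation system of Euler characteristic 2 (genus 0, Heffter-Edmonds). *)
Definition fullerene : Prop :=
  [/\ irreflexive adj, symmetric adj,
      (forall x, #|[set y | adj x y]| = 3),
      (forall x y, connect adj x y)
    & is_rotation_system] /\
  [/\
      (2 * #|T| + 2 * #|faces| = #|darts| + 4)%N,           (* V - E + F = 2 *)
      (forall d, d \in darts ->
        (#|face_of d| == 5) || (#|face_of d| == 6))
  (* each face boundary is a cycle (no repeated vertex) *)
    & forall d, d \in darts -> #|face_verts d| = #|face_of d|].

(* A spanning subgraph of G given by its edge relation s; every component
   (for connect s) is isomorphic to K_{1,3}, with centre c. *)
Definition perfect_star_packing (s : rel T) : Prop :=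
  [/\ symmetric s, (forall x y, s x y -> adj x y)
    & forall x, exists c : T,
        let K := [set y | connect s x y] in
        [/\ c \in K, #|K| = 4
          & forall y z, y \in K -> z \in K -> s y z = (y == c) (+) (z == c)]].

Definition centers (s : rel T) : {set T} := [set x | #|[set y | s x y]| == 3].

Definition is_cycle (k : nat) (v : 'I_k -> T) : Prop :=
  [/\ (3 <= k)%N, injective v & forall i, adj (v i) (v (ordS i))].

Definition on_cycle (k : nat) (v : 'I_k -> T) (x : T) : bool :=
  [exists i, v i == x].

Definition on_cycle_edge (k : nat) (v : 'I_k -> T) (x y : T) : bool :=
  [exists i, ((x == v i) && (y == v (ordS i))) || ((y == v i) && (x == v (ordS i)))].

Definition cycle_edges (k : nat) (v : 'I_k -> T) : {set {set T}} :=
  [set [set v i; v (ordS i)] | i : 'I_k].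

Definition non_facial (k : nat) (v : 'I_k -> T) : Prop :=
  forall d, d \in darts -> face_edges d != cycle_edges v.

(* ---- the two sides of C ----
   Two darts lie on the same side of C iff one can go from one to the other
   moving along face boundaries and crossing only edges not on C.  The region
   on the side of a dart d0 is the union of the faces of the darts on d0's side;
   a vertex lies in the interior of that region iff it is not on C and is
   incident with a face of that region. *)
Definition side_step (k : nat) (v : 'I_k -> T) (d e : T * T) : bool :=
  [&& d \in darts, e \in darts &
      (e == faceperm d) || ((e == (d.2, d.1)) && ~~ on_cycle_edge v d.1 d.2)].

Definition same_side (k : nat) (v : 'I_k -> T) (d e : T * T) : bool :=
  connect (side_step v) d e.

Definition in_side (k : nat) (v : 'I_k -> T) (d0 : T * T) (x : T) : bool :=
  ~~ on_cycle v x && [exists y, adj x y && same_side v d0 (x, y)].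

Definition has_nbr_in_side (k : nat) (v : 'I_k -> T) (d0 : T * T) (x : T) : Prop :=
  exists y, adj x y /\ in_side v d0 y.

End Fullerene.

(* Main.v *)
Require Import Defs.
From mathcomp Require Import all_boot all_algebra.
From mathcomp Require Import zify.



Set Implicit Arguments. Unset Strict Implicit. Unset Printing Implicit Defensive.
Import GRing.Theory.

Lemma arith_j (n j : nat) : (n = 5 \/ n = 6) -> j < n -> j != 0 -> j != 1 -> j != 2 ->
  j != 3 -> j != n.-1 -> j.+1 != n.-1 -> False.
Proof. by case=> ->; case: j => [|[|[|[|[|[|j]]]]]]. Qed.

Section Chain.
Local Open Scope ring_scope.
Lemma chain_lemma (F : fieldType) mF mE mV (B : 'M[F]_(mF,mE)) (A : 'M[F]_(mE,mV)) :
  B *m A = 0 ->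
  (\rank (kermx B) <= 1)%N -> (\rank (kermx A^T) <= 1)%N ->
  (mF + mV = mE + 2)%N ->
  forall h : 'rV_mE, h *m A = 0 -> exists u : 'rV_mF, h = u *m B.
Proof.
move=> BA kB kA eul h hA.
have r1 := mxrank_ker B; have r2 := mxrank_ker A^T; rewrite mxrank_tr in r2.
have r3 := mxrank_ker A.
have b1 := rank_leq_row B; have b2 := rank_leq_col A.
have sBK : (B <= kermx A)%MS by apply/sub_kermxP.
have sKB : (kermx A <= B)%MS.
  have := mxrank_leqif_sup sBK; case=> _ <-.
  apply/eqP; apply: anti_leq; rewrite mxrankS //=; lia.
have : (h <= B)%MS by apply: submx_trans sKB; apply/sub_kermxP.
by case/submxP=> u ->; exists u.
Qed.
End Chain.

Definition rv (T : Type) (d : T * T) := (d.2, d.1).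
Lemma rvK (T : Type) : involutive (@rv T). Proof. by case. Qed.

Section Jordan.
Variables (T : finType) (adj : rel T) (rot : T -> T -> T).
Hypothesis adj_irr : irreflexive adj.
Hypothesis adj_sym : symmetric adj.
Hypothesis deg3 : forall x, #|[set y | adj x y]| = 3.
Hypothesis rot_adj : forall x u, adj x u -> adj x (rot x u).
Hypothesis rot_inj : forall x u w, adj x u -> adj x w -> rot x u = rot x w -> u = w.
Hypothesis rot_tr : forall x u w, adj x u -> adj x w -> exists n, iter n (rot x) u = w.
Hypothesis conn : forall x y, connect adj x y.

Local Notation fp := (faceperm rot).
Local Notation dart d := (d \in darts adj).

Lemma iter_rot_adj x u n : adj x u -> adj x (iter n (rot x) u).
Proof. by move=> h; elim: n => //= n IH; apply: rot_adj. Qed.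

Lemma rot_neq1 x a : adj x a -> rot x a != a.
Proof.
move=> xa; apply/eqP=> ra.
have sub : [set y | adj x y] \subset [set a].
  apply/subsetP=> z; rewrite !inE => xz.
  have [n <-] := rot_tr xa xz.
  by apply/eqP; elim: n => //= n IH; rewrite IH ra.
by move: (subset_leq_card sub); rewrite deg3 cards1.
Qed.

Lemma rot_neq2 x a : adj x a -> rot x (rot x a) != a.
Proof.
move=> xa; apply/eqP=> ra.
have sub : [set y | adj x y] \subset [set a; rot x a].
  apply/subsetP=> z; rewrite !inE => xz.
  have [n <-] := rot_tr xa xz.
  elim: n => [|n IH] /=; first by rewrite eqxx.
  by case/orP: IH => /eqP ->; rewrite ?ra eqxx ?orbT.
move: (subset_leq_card sub); rewrite deg3.
by rewrite cards2; case: (_ != _).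
Qed.

Lemma nbr3 x a z : adj x a -> adj x z ->
  [\/ z = a, z = rot x a | z = rot x (rot x a)].
Proof.
move=> xa xz.
set b := rot x a; set c := rot x b.
have xb : adj x b by apply: rot_adj.
have xc : adj x c by apply: rot_adj.
have ab : a != b by rewrite eq_sym rot_neq1.
have bc : b != c by rewrite eq_sym rot_neq1.
have ac : a != c by rewrite eq_sym rot_neq2.
have sub : [set a; b; c] \subset [set y | adj x y].
  by apply/subsetP=> y; rewrite !inE => /orP[/orP[]|] /eqP ->.
have card3 : #|[set a; b; c]| = 3.
  rewrite -setUA cardsU1 cards2 !inE bc.
  by rewrite (negbTE ab) (negbTE ac).
have : z \in [set a; b; c].
  move/subset_leqif_cards: sub => [_]; rewrite deg3 card3 eqxx => /esym/eqP ->.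
  by rewrite inE.
by rewrite !inE => /orP[/orP[]|] /eqP ->; [constructor 1|constructor 2|constructor 3].
Qed.

Lemma rot3 x a : adj x a -> rot x (rot x (rot x a)) = a.
Proof.
move=> xa.
set b := rot x a; set c := rot x b.
have xb : adj x b by apply: rot_adj.
have xc : adj x c by apply: rot_adj.
have [e|e|e] := nbr3 xa (rot_adj xc) => //.
  move: (rot_inj xc xa e) => ca.
  by move: (rot_neq2 xa); rewrite -/b -/c ca eqxx.
by move: (rot_neq1 xc); rewrite e eqxx.
Qed.



Lemma dartE d : dart d = adj d.1 d.2.
Proof. by rewrite inE. Qed.

Lemma fp_dart d : dart d -> dart (fp d).
Proof. by case: d => a b; rewrite !dartE /= => ab; apply: rot_adj; rewrite adj_sym. Qed.

Lemma fp_inj : {in darts adj &, injective fp}.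
Proof.
case=> a b [a' b']; rewrite !dartE /= => ab ab' [eb er]; subst b'.
by congr pair; apply: (@rot_inj b); rewrite // adj_sym.
Qed.

Definition fpinv (d : T * T) := (rot d.1 (rot d.1 d.2), d.1).

Lemma fpK d : dart d -> fpinv (fp d) = d.
Proof. by case: d => a b; rewrite dartE /= => ab; rewrite /fpinv /= rot3 // adj_sym. Qed.

Lemma fpinvK d : dart d -> fp (fpinv d) = d.
Proof. by case: d => a b; rewrite dartE /= => ab; rewrite /fpinv /faceperm /= rot3. Qed.

Lemma fpinv_dart d : dart d -> dart (fpinv d).
Proof.
case: d => a b; rewrite !dartE /= => ab; rewrite adj_sym.
by do 2 apply: rot_adj.
Qed.

Lemma iter_fp_dart n d : dart d -> dart (iter n fp d).
Proof. by move=> h; elim: n => //= n IH; apply: fp_dart. Qed.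

Lemma face_card d : #|face_of rot d| = order fp d.
Proof. by rewrite /order -cardsE /face_of; apply: eq_card => e; rewrite !inE. Qed.

Lemma iter_face n d : iter n fp d \in face_of rot d.
Proof. by rewrite inE fconnect_iter. Qed.

Lemma face_iterP d e : e \in face_of rot d -> exists n, e = iter n fp d.
Proof. by rewrite inE => h; exists (findex fp d e); rewrite iter_findex. Qed.

Lemma face_order d : dart d -> iter #|face_of rot d| fp d = d.
Proof. by move=> h; rewrite face_card (iter_order_in fp_dart fp_inj). Qed.

Lemma face_pos d : 0 < #|face_of rot d|.
Proof. by rewrite face_card order_gt0. Qed.

Lemma face_sym d e : dart d -> e \in face_of rot d -> face_of rot e = face_of rot d.
Proof.
move=> dd de; have ed : dart e by have [n ->] := face_iterP de; apply: iter_fp_dart.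
apply/setP => z; rewrite !inE; move: de; rewrite inE => de.
apply/idP/idP => h; first exact: connect_trans de h.
rewrite (fconnect_sym_in fp_dart fp_inj) // in de.
exact: connect_trans de h.
Qed.

Lemma iter_mod d n : dart d -> iter n fp d = iter (n %% #|face_of rot d|) fp d.
Proof.
move=> dd; rewrite {1}(divn_eq n #|face_of rot d|) addnC iterD.
have -> : forall q, iter (q * #|face_of rot d|) fp d = d.
  by elim=> [|q IH] //=; rewrite mulSn iterD IH face_order.
by [].
Qed.

Lemma iter_small_inj d a b : a < #|face_of rot d| -> b < #|face_of rot d| ->
  iter a fp d = iter b fp d -> a = b.
Proof.
rewrite face_card => ha hb e.
by rewrite -(findex_iter ha) -(findex_iter hb) e.
Qed.

Lemma iter_eq_mod d a b : dart d -> iter a fp d = iter b fp d ->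
  a %% #|face_of rot d| = b %% #|face_of rot d|.
Proof.
move=> dd; rewrite (iter_mod a dd) (iter_mod b dd).
by apply: iter_small_inj; rewrite ltn_mod face_pos.
Qed.

Hypothesis fv : forall d, dart d -> #|face_verts rot d| = #|face_of rot d|.

Lemma face_fst_inj d : dart d -> {in face_of rot d &, injective fst}.
Proof.
move=> dd; apply/imset_injP; rewrite -(fv dd) /face_verts.
by apply/eqP; apply: eq_card => x.
Qed.

Lemma face_fst d a b : dart d -> (iter a fp d).1 = (iter b fp d).1 ->
  a %% #|face_of rot d| = b %% #|face_of rot d|.
Proof.
move=> dd e; apply: iter_eq_mod => //.
by apply: (face_fst_inj dd) => //; apply: iter_face.
Qed.


Definition ltT (x y : T) := (enum_rank x < enum_rank y)%N.
Definition Es := [set d : T * T | adj d.1 d.2 && ltT d.1 d.2].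

Lemma rv_dart d : dart (rv d) = dart d.
Proof. by case: d => a b; rewrite !inE /= adj_sym. Qed.

Lemma darts_split : darts adj = Es :|: [set rv e | e in Es].
Proof.
apply/setP => -[a b]; rewrite !inE /=.
have -> : ((a, b) \in [set rv e | e in Es]) = ((b, a) \in Es).
  apply/imsetP/idP => [[e eE [-> ->]]|h]; first by case: e eE.
  by exists (b, a).
rewrite inE /= adj_sym; case ab: (adj b a) => //=.
rewrite /ltT; case: ltngtP => // /val_inj /enum_rank_inj ba.
by move: ab; rewrite ba adj_irr.
Qed.

Lemma Es_disj : [disjoint Es & [set rv e | e in Es]].
Proof.
apply/pred0P => -[a b] /=; rewrite !inE /=.
case: (boolP ((a, b) \in [set rv e | e in Es])) => [/imsetP[[c d]]|]; last by rewrite andbF.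
rewrite inE /= => /andP[_ cd] [-> ->].
by rewrite /ltT in cd *; rewrite ltnNge (ltnW cd) !andbF.
Qed.

Lemma card_darts : #|darts adj| = (2 * #|Es|)%N.
Proof.
rewrite darts_split cardsU (disjoint_setI0 Es_disj) cards0 subn0.
by rewrite card_imset ?mul2n ?addnn //; apply: (can_inj (@rvK T)).
Qed.

Lemma sum_darts (R : nmodType) (G : T * T -> R) :
  (\sum_(d in darts adj) G d = \sum_(e in Es) (G e + G (rv e)))%R.
Proof.
rewrite big_split /= darts_split.
rewrite (eq_bigl [predU Es & [set rv e | e in Es]]); last by move=> d; rewrite !inE.
rewrite bigU /=; last exact: Es_disj.
congr (_ + _)%R.
by rewrite big_imset //; apply: in2W; apply: (can_inj (@rvK T)).
Qed.

Lemma around (R : Type) (g : T * T -> R) :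
  (forall d, dart d -> g (fp d) = g d) -> (forall d, dart d -> g (rv d) = g d) ->
  forall x y z, adj x y -> adj x z -> g (x, y) = g (x, z).
Proof.
move=> gf gr x y z xy xz; have [n <-] := rot_tr xy xz.
elim: n => //= n ->; set w := iter n (rot x) y.
have xw : adj x w by apply: iter_rot_adj.
rewrite -[(x, rot x w)]/(fp (w, x)) gf; last by rewrite inE /= adj_sym.
by rewrite -[(w, x)]/(rv (x, w)) gr // inE.
Qed.

Lemma darts_const (R : Type) (g : T * T -> R) :
  (forall d, dart d -> g (fp d) = g d) -> (forall d, dart d -> g (rv d) = g d) ->
  forall d e, dart d -> dart e -> g d = g e.
Proof.
move=> gf gr [a b] [c e]; rewrite !inE /= => ab ce.
have := conn a c; move/connectP => [p pth lst].
elim: p a b ab pth lst => [|x p IH] a b ab /=.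
  by move=> _ ac; subst c; apply: (around gf gr).
case/andP=> ax pth lst.
rewrite (around gf gr ab ax) -[(a, x)]/(rv (x, a)) gr; last by rewrite inE /= adj_sym.
by apply: IH => //; rewrite adj_sym.
Qed.


Local Open Scope ring_scope.
Definition bF (b : bool) : 'F_2 := b%:R.

Lemma sum_pick n (r : 'I_n -> 'F_2) (P : 'I_n -> bool) j :
  (forall i, P i = (i == j)) -> \sum_i r i * bF (P i) = r j.
Proof.
move=> hP; rewrite (bigD1 j) //= big1 ?addr0; first by rewrite hP eqxx /bF mulr1.
by move=> i ij; rewrite hP (negbTE ij) /bF mulr0.
Qed.

Lemma sum_Es (H : T * T -> 'F_2) :
  \sum_(j < #|Es|) H (enum_val j) = \sum_(e in Es) H e.
Proof. by rewrite (big_enum_val (A := mem Es)). Qed.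

Variable d0 : T * T.
Hypothesis d0d : dart d0.
Let F0in : face_of rot d0 \in faces adj rot := imset_f _ d0d.
Definition fidx (d : T * T) : 'I_#|faces adj rot| := enum_rank_in F0in (face_of rot d).

Lemma face_in d : dart d -> face_of rot d \in faces adj rot.
Proof. by move=> h; apply: imset_f. Qed.

Lemma fidx_val d : dart d -> enum_val (fidx d) = face_of rot d.
Proof. by move=> h; rewrite /fidx enum_rankK_in // face_in. Qed.

Lemma faces_dart (i : 'I_#|faces adj rot|) :
  exists2 d, dart d & fidx d = i.
Proof.
have := enum_valP i; case/imsetP => d dd e; exists d => //.
by rewrite /fidx -e enum_valK_in.
Qed.



Lemma in_face_fidx e (i : 'I_#|faces adj rot|) : dart e ->
  (e \in (enum_val i : {set T * T})) = (fidx e == i).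
Proof.
move=> de; have [d dd <-] := faces_dart i; rewrite fidx_val //.
apply/idP/eqP => [h|h]; first by rewrite /fidx (face_sym dd h).
rewrite -(fidx_val dd) -h fidx_val //.
by rewrite -[e]/(iter 0 fp e) iter_face.
Qed.

Lemma fidx_fp d : dart d -> fidx (fp d) = fidx d.
Proof.
move=> dd; have h : fp d \in face_of rot d by rewrite -[fp d]/(iter 1 fp d) iter_face.
by rewrite /fidx (face_sym dd h).
Qed.

Definition Bm : 'M['F_2]_(#|faces adj rot|, #|Es|) :=
  \matrix_(i, j) (bF (enum_val j \in (enum_val i : {set T * T}))
                 + bF (rv (enum_val j) \in (enum_val i : {set T * T}))).

Definition Am : 'M['F_2]_(#|Es|, #|T|) :=
  \matrix_(j, x) (bF ((enum_val j : T * T).1 == enum_val x)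
                 + bF ((enum_val j : T * T).2 == enum_val x)).

Lemma F2_addxx (x : 'F_2) : x + x = 0.
Proof. by apply/eqP; case: x => [[|[|]]]. Qed.

Lemma F2_cases (x : 'F_2) : x = 0 \/ x = 1.
Proof. by case: x => [[|[|]]] //= ?; [left|right]; apply/val_inj. Qed.

Lemma Es_dart e : e \in Es -> dart e.
Proof. by rewrite !inE => /andP[]. Qed.

Lemma BA0 : Bm *m Am = 0.
Proof.
apply/matrixP => i x; rewrite !mxE.
under eq_bigr do rewrite !mxE.
set Fc : {set T * T} := enum_val i; set y := enum_val x.
pose G (d : T * T) := bF (d \in Fc) * (bF (d.1 == y) + bF (d.2 == y)).
rewrite (sum_Es (fun e => (bF (e \in Fc) + bF (rv e \in Fc)) *
                          (bF (e.1 == y) + bF (e.2 == y)))).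
rewrite (eq_bigr (fun e => G e + G (rv e))); last first.
  by move=> e _; rewrite /G /= [bF (_.2 == _) + _]addrC mulrDl.
rewrite -sum_darts /G.
under eq_bigr do rewrite mulrDr.
rewrite big_split /=.
rewrite [X in X + _](reindex_onto fp fpinv); last first.
  by move=> d dd; apply: fpinvK.
rewrite [X in X + _](eq_bigl (fun d => d \in darts adj)); last first.
  move=> d /=; apply/andP/idP => [[h /eqP <-]|h].
    by apply: fpinv_dart.
  by split; [apply: fp_dart | apply/eqP; apply: fpK].
rewrite [X in X + _](eq_bigr (fun d => bF (d \in Fc) * bF (d.2 == y))).
  by rewrite F2_addxx.
move=> d dd; congr (_ * _); rewrite /Fc !in_face_fidx ?fidx_fp //.
exact: fp_dart.
Qed.


Lemma Bm_entry (w : 'rV['F_2]_#|faces adj rot|) e (eEs : e \in Es) :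
  (w *m Bm) 0 (enum_rank_in eEs e) = w 0 (fidx e) + w 0 (fidx (rv e)).
Proof.
rewrite !mxE; under eq_bigr do rewrite !mxE enum_rankK_in //.
rewrite (eq_bigr (fun a => w 0 a * bF (a == fidx e) + w 0 a * bF (a == fidx (rv e)))).
  rewrite big_split /=; congr (_ + _); exact: sum_pick.
move=> a _; rewrite mulrDr; have de := Es_dart eEs.
by rewrite !in_face_fidx ?rv_dart // ![fidx _ == a]eq_sym.
Qed.

Lemma kerB : (\rank (kermx Bm) <= 1)%N.
Proof.
have sub : (kermx Bm <= (const_mx 1 : 'rV['F_2]_#|faces adj rot|))%MS.
  apply/row_subP => r; set w := row r (kermx Bm).
  have w0 : w *m Bm = 0 by rewrite -row_mul mulmx_ker row0.
  clearbody w.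
  pose g d := w 0 (fidx d).
  have gf : forall d, dart d -> g (fp d) = g d by move=> d dd; rewrite /g fidx_fp.
  have gr : forall d, dart d -> g (rv d) = g d.
    have h : forall e, e \in Es -> g (rv e) = g e.
      move=> e eEs; have := Bm_entry w eEs; rewrite w0 mxE => /esym/eqP.
      by rewrite addr_eq0 /g => /eqP ->; case: (F2_cases (w 0 (fidx (rv e)))) => -> //; apply/eqP.
    move=> d dd; move: dd; rewrite darts_split inE => /orP[/h //|].
    by case/imsetP => e eEs ->; rewrite rvK (h e eEs).
  apply/sub_rVP; exists (w 0 (fidx d0)); apply/rowP => a.
  rewrite !mxE mulr1; have [d dd <-] := faces_dart a.
  exact: (darts_const gf gr dd d0d).
by apply: leq_trans (mxrankS sub) (rank_leq_row _).
Qed.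


Lemma AmT_entry (w : 'rV['F_2]_#|T|) e (eEs : e \in Es) :
  (w *m Am^T) 0 (enum_rank_in eEs e) = w 0 (enum_rank e.1) + w 0 (enum_rank e.2).
Proof.
rewrite !mxE; under eq_bigr do rewrite !mxE enum_rankK_in //.
under eq_bigr do rewrite mulrDr.
rewrite big_split /=; congr (_ + _); apply: sum_pick => x;
  by apply/eqP/eqP => [->|->]; rewrite ?enum_valK ?enum_rankK.
Qed.

Lemma kerA : (\rank (kermx Am^T) <= 1)%N.
Proof.
have sub : (kermx Am^T <= (const_mx 1 : 'rV['F_2]_#|T|))%MS.
  apply/row_subP => r; set w := row r (kermx Am^T).
  have w0 : w *m Am^T = 0 by rewrite -row_mul mulmx_ker row0.
  clearbody w.
  pose g x := w 0 (enum_rank x).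
  have ge : forall a b, adj a b -> g a = g b.
    have h : forall e, e \in Es -> g e.1 = g e.2.
      move=> e eEs; have := AmT_entry w eEs; rewrite w0 mxE => /esym/eqP.
      by rewrite addr_eq0 /g => /eqP ->; case: (F2_cases (w 0 (enum_rank e.2))) => -> //; apply/eqP.
    move=> a b ab; have : (a, b) \in darts adj by rewrite inE.
    rewrite darts_split inE => /orP[/h //|].
    by case/imsetP => e eEs [-> ->]; rewrite (h e eEs).
  have gc : forall a b, g a = g b.
    move=> a b; have := conn a b; move/connectP => [p pth ->].
    elim: p a pth => [|x p IH] a //= /andP[ax pth].
    by rewrite (ge _ _ ax); apply: IH.
  apply/sub_rVP; exists (w 0 (enum_rank d0.1)); apply/rowP => a.
  by rewrite !mxE mulr1 -(enum_valK a); apply: gc.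
by apply: leq_trans (mxrankS sub) (rank_leq_row _).
Qed.

Hypothesis euler : (2 * #|T| + 2 * #|faces adj rot| = #|darts adj| + 4)%N.

Lemma euler2 : (#|faces adj rot| + #|T| = #|Es| + 2)%N.
Proof. by move: euler; rewrite card_darts; lia. Qed.


Lemma sum_bF (X : finType) (A : {set X}) (P : X -> bool) :
  \sum_(d in A) bF (P d) = (#|[set d in A | P d]|)%:R.
Proof.
rewrite /bF -natr_sum; congr (_%:R).
rewrite -sum1_card big_mkcond [RHS]big_mkcond /=.
by apply: eq_bigr => d _; rewrite !inE; case: (d \in A); case: (P d).
Qed.

Variables (k : nat) (v : 'I_k -> T).
Hypothesis cyc : is_cycle adj v.

Lemma cyc_inj : injective v. Proof. by case: cyc. Qed.
Lemma cyc_adj i : adj (v i) (v (ordS i)). Proof. by case: cyc. Qed.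
Lemma cyc_adjp i : adj (v i) (v (ord_pred i)).
Proof. by rewrite adj_sym; have := cyc_adj (ord_pred i); rewrite ord_predK. Qed.
Lemma k3 : (3 <= k)%N. Proof. by case: cyc. Qed.

Lemma ordS_pred_neq (i : 'I_k) : ordS i != ord_pred i.
Proof.
apply/eqP => e; have : ordS (ordS i) = i by rewrite e ord_predK.
move/(congr1 val) => /=; have := ltn_ord i; have := k3.
case: i {e} => i /= ik k3'.
have [e1|lt1] := eqVneq i.+1 k.
  by rewrite e1 modnn modn_small; lia.
have i1 : (i.+1 < k)%N by lia.
rewrite (modn_small i1).
have [e2|lt2] := eqVneq i.+2 k; first by rewrite e2 modnn; lia.
by rewrite modn_small; lia.
Qed.

Lemma oce_sym a b : on_cycle_edge v a b = on_cycle_edge v b a.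
Proof. by apply: eq_existsb => i; rewrite orbC. Qed.

Lemma oce_v i z : on_cycle_edge v (v i) z = (z == v (ordS i)) || (z == v (ord_pred i)).
Proof.
apply/existsP/orP => [[j /orP[/andP[/eqP/cyc_inj <- ->]|/andP[/eqP -> /eqP /cyc_inj e]]]|[/eqP ->|/eqP ->]].
- by left.
- by right; rewrite e ordSK.
- by exists i; rewrite !eqxx.
- by exists (ord_pred i); rewrite ord_predK !eqxx orbT.
Qed.

Lemma oce_off y z : ~~ on_cycle v y -> on_cycle_edge v y z = false.
Proof.
move=> hy; apply/existsP => -[j /orP[/andP[/eqP e _]|/andP[_ /eqP e]]];
  move/existsP: hy; apply; [exists j | exists (ordS j)]; by rewrite e.
Qed.

Definition hC : 'rV['F_2]_#|Es| :=
  \row_j bF (on_cycle_edge v (enum_val j : T * T).1 (enum_val j : T * T).2).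

Lemma hCA : hC *m Am = 0.
Proof.
apply/rowP => x; rewrite !mxE; under eq_bigr do rewrite !mxE.
set y := enum_val x.
pose G (d : T * T) := bF (on_cycle_edge v d.1 d.2) * bF (d.1 == y).
rewrite (sum_Es (fun e => bF (on_cycle_edge v e.1 e.2) *
                          (bF (e.1 == y) + bF (e.2 == y)))).
rewrite (eq_bigr (fun e => G e + G (rv e))); last first.
  by move=> e _; rewrite /G /= mulrDr oce_sym.
rewrite -sum_darts /G.
rewrite (eq_bigr (fun d => bF (on_cycle_edge v d.1 d.2 && (d.1 == y)))); last first.
  by move=> d _; rewrite /bF -natrM mulnb.
rewrite sum_bF.
case: (boolP (on_cycle v y)) => [/existsP[i /eqP yi]|yoff].
  have -> : [set d in darts adj | on_cycle_edge v d.1 d.2 && (d.1 == y)] =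
            [set (v i, v (ordS i)); (v i, v (ord_pred i))].
    apply/setP => -[a b]; rewrite !inE /= -yi.
    have [->|ne] := eqVneq a (v i); last by rewrite !xpair_eqE (negbTE ne) !andbF.
    rewrite oce_v !andbT !xpair_eqE eqxx /=.
    case: (eqVneq b (v (ordS i))) => [->|]; first by rewrite cyc_adj.
    by case: (eqVneq b (v (ord_pred i))) => [->|]; rewrite ?cyc_adjp ?andbF.
  rewrite cards2 xpair_eqE eqxx /=.
  have -> : (v (ordS i) == v (ord_pred i)) = false.
    by apply/negbTE; apply: contra (ordS_pred_neq i) => /eqP/cyc_inj ->.
  by apply/eqP.
have -> : [set d in darts adj | on_cycle_edge v d.1 d.2 && (d.1 == y)] = set0.
  apply/setP => -[a b]; rewrite !inE /=.
  case: eqP => [->|_]; rewrite ?andbF //.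
  by rewrite (oce_off _ yoff) /= andbF.
by rewrite cards0.
Qed.


Lemma side_fun : exists g : T * T -> 'F_2,
  (forall d, dart d -> g (fp d) = g d) /\
  (forall d, dart d -> g d + g (rv d) = bF (on_cycle_edge v d.1 d.2)).
Proof.
have [u hu] := chain_lemma BA0 kerB kerA euler2 hCA.
exists (fun d => u 0 (fidx d)); split; first by move=> d dd; rewrite fidx_fp.
have h : forall e, e \in Es -> u 0 (fidx e) + u 0 (fidx (rv e)) = bF (on_cycle_edge v e.1 e.2).
  move=> e eEs; rewrite -Bm_entry -hu mxE.
  by rewrite enum_rankK_in.
move=> d; rewrite darts_split inE => /orP[/h //|].
case/imsetP => e eEs ->; rewrite rvK addrC h //=; by rewrite oce_sym.
Qed.

Lemma jordan i : ~~ same_side adj rot v (v i, v (ordS i)) (v (ordS i), v i).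
Proof.
have [g [gf gr]] := side_fun.
have gc : forall d e, connect (side_step adj rot v) d e -> g d = g e.
  move=> d e /connectP [p pth ->]; elim: p d pth => [|x p IH] d //= /andP[st pth].
  rewrite -(IH x pth); move: st; rewrite /side_step => /and3P[dd xd /orP[/eqP ->|]].
    by rewrite gf.
  case/andP => /eqP -> noce; have := gr d dd; rewrite (negbTE noce) /bF /=.
  by move/eqP; rewrite addr_eq0 => /eqP ->; case: (F2_cases (g (rv d))) => -> //; apply/eqP.
apply/negP => /gc e.
have dd : dart (v i, v (ordS i)) by rewrite inE /= cyc_adj.
have := gr _ dd; rewrite -[(v (ordS i), v i)]/(rv (v i, v (ordS i))) in e.
rewrite -e F2_addxx /=.
have -> : on_cycle_edge v (v i) (v (ordS i)) by rewrite oce_v eqxx.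
by [].
Qed.

Variable s : rel T.
Hypothesis psp : perfect_star_packing adj s.

Lemma s_sym : symmetric s. Proof. by case: psp. Qed.
Lemma s_adj x y : s x y -> adj x y. Proof. by case: psp => _ h _; apply: h. Qed.

Lemma s_csym : connect_sym s. Proof. exact: (sym_connect_sym s_sym). Qed.

Lemma not_center x c :
  (forall y z, connect s x y -> connect s x z -> s y z = (y == c) (+) (z == c)) ->
  x != c -> x \notin centers s.
Proof.
move=> hf xc; rewrite inE; apply/negP => /eqP h3.
have sub : [set y | s x y] \subset [set c].
  apply/subsetP => z; rewrite !inE => xz.
  by move: (hf x z (connect0 _ x) (connect1 xz)); rewrite xz (negbTE xc) /= => <-.
by move: (subset_leq_card sub); rewrite h3 cards1.
Qed.

Lemma center_self c : c \in centers s ->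
  forall y z, connect s c y -> connect s c z -> s y z = (y == c) (+) (z == c).
Proof.
move=> cc; case: psp => _ _ /(_ c) [c' [/= c'K _ hf]].
have hf' : forall y z, connect s c y -> connect s c z -> s y z = (y == c') (+) (z == c').
  by move=> y z cy cz; apply: hf; rewrite inE.
have [e|ne] := eqVneq c c'; first by move: hf'; rewrite -e.
by move: (not_center hf' ne); rewrite cc.
Qed.

Lemma center_comp c c' : c \in centers s -> c' \in centers s -> connect s c c' -> c = c'.
Proof.
move=> cc cc' ccc; have hf := center_self cc.
have hf' : forall y z, connect s c' y -> connect s c' z -> s y z = (y == c) (+) (z == c).
  by move=> y z cy cz; apply: hf; apply: connect_trans ccc _.
have [e|ne] := eqVneq c' c; first by [].
by move: (not_center hf' ne); rewrite cc'.
Qed.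

Lemma centers_nadj c c' : c \in centers s -> c' \in centers s -> ~~ adj c c'.
Proof.
move=> cc cc'; apply/negP => a.
have scc : s c c'.
  have : [set y | s c y] \subset [set y | adj c y].
    by apply/subsetP => y; rewrite !inE; apply: s_adj.
  move/subset_leqif_cards => [_]; rewrite deg3.
  move: cc; rewrite inE => /eqP -> /esym/eqP/setP/(_ c'); rewrite !inE a => ->.
  by [].
have := center_comp cc cc' (connect1 scc) => e.
by move: a; rewrite e adj_irr.
Qed.

Lemma center_s c y : c \in centers s -> adj c y -> s c y.
Proof.
move=> cc a.
have : [set y | s c y] \subset [set y | adj c y].
  by apply/subsetP => z; rewrite !inE; apply: s_adj.
move/subset_leqif_cards => [_]; rewrite deg3.
by move: cc; rewrite inE => /eqP -> /esym/eqP/setP/(_ y); rewrite !inE a => ->.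
Qed.

Lemma centers_common c c' y : c \in centers s -> c' \in centers s ->
  adj c y -> adj c' y -> c = c'.
Proof.
move=> cc cc' a a'; apply: center_comp => //.
apply: (connect_trans (connect1 (center_s cc a))).
by rewrite s_csym; apply: connect1; apply: center_s.
Qed.

Lemma has_center x : x \notin centers s -> exists2 c, c \in centers s & adj x c.
Proof.
move=> xn; case: psp => _ _ /(_ x) [c [/= cK K4 hf]].
have hf' : forall y z, connect s x y -> connect s x z -> s y z = (y == c) (+) (z == c).
  by move=> y z cy cz; apply: hf; rewrite inE.
rewrite inE in cK.
have [e|ne] := eqVneq x c.
  exfalso; move/negP: xn; apply; rewrite inE; apply/eqP.
  have -> : [set y | s x y] = [set y | connect s x y] :\ x.
    apply/setP => y; rewrite !inE; apply/idP/andP => [xy|[yx cy]].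
      split; last exact: connect1.
      by apply: contraTneq xy => ->; apply/negP => /s_adj; rewrite adj_irr.
    by rewrite (hf' x y (connect0 _ x) cy) -e eqxx (negbTE yx).
  by rewrite (cardsD1 x) inE connect0 /= in K4; case: K4.
exists c; last by apply: s_adj; rewrite hf' ?connect0 // (negbTE ne) eqxx.
rewrite inE; apply/eqP.
have -> : [set y | s c y] = [set y | connect s x y] :\ c.
  have cx : connect s c x by rewrite s_csym.
  apply/setP => y; rewrite !inE; apply/idP/andP => [xy|[yc cy]].
    have xy' : connect s x y by apply: connect_trans cK (connect1 xy).
    split => //; apply: contraTneq xy => ->; rewrite hf' //.
    by rewrite eqxx.
  by rewrite hf' // eqxx (negbTE yc).
by rewrite (cardsD1 c) inE cK /= in K4; case: K4.
Qed.

Hypothesis noc : forall i, v i \notin centers s.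

Definition cen x := odflt x [pick c | (c \in centers s) && adj x c].

Lemma cen_spec i : cen (v i) \in centers s /\ adj (v i) (cen (v i)).
Proof.
rewrite /cen; case: pickP => [c /andP[]//|/=].
have [c cc a] := has_center (noc i) => /(_ c); by rewrite cc a.
Qed.

Lemma center_off c : c \in centers s -> ~~ on_cycle v c.
Proof. by move=> cc; apply/existsP => -[j /eqP e]; move: (noc j); rewrite e cc. Qed.

Definition pv i := v (ord_pred i).
Definition qv i := v (ordS i).
Definition uv i := cen (v i).

Lemma uv_c i : uv i \in centers s. Proof. by case: (cen_spec i). Qed.
Lemma uv_adj i : adj (v i) (uv i). Proof. by case: (cen_spec i). Qed.
Lemma uv_off i : ~~ on_cycle v (uv i). Proof. exact: center_off (uv_c i). Qed.
Lemma v_on i : on_cycle v (v i). Proof. by apply/existsP; exists i. Qed.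
Lemma uv_neq i j : uv i != v j.
Proof. by apply: contraNneq (uv_off i) => ->; apply: v_on. Qed.
Lemma pv_adj i : adj (v i) (pv i). Proof. exact: cyc_adjp. Qed.
Lemma qv_adj i : adj (v i) (qv i). Proof. exact: cyc_adj. Qed.

Lemma nbr_v i z : adj (v i) z -> [\/ z = pv i, z = qv i | z = uv i].
Proof.
move=> az.
have sub : [set pv i; qv i; uv i] \subset [set y | adj (v i) y].
  by apply/subsetP=> y; rewrite !inE => /orP[/orP[]|] /eqP ->;
    rewrite ?pv_adj ?qv_adj ?uv_adj.
have pq : pv i != qv i.
  by apply: contra (ordS_pred_neq i) => /eqP/cyc_inj ->.
have card3 : #|[set pv i; qv i; uv i]| = 3.
  rewrite -setUA cardsU1 cards2 !inE (negbTE pq) ![_ == uv i]eq_sym.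
  have h1 := uv_neq i (ord_pred i); have h2 := uv_neq i (ordS i).
  by rewrite /pv /qv (negbTE h1) h2.
have : z \in [set pv i; qv i; uv i].
  move/subset_leqif_cards: sub => [_]; rewrite deg3 card3 eqxx => /esym/eqP ->.
  by rewrite inE.
by rewrite !inE => /orP[/orP[]|] /eqP ->; [constructor 1|constructor 2|constructor 3].
Qed.

Definition tB i := rot (v i) (pv i) == uv i.

Lemma typeB i : tB i ->
  [/\ rot (v i) (pv i) = uv i, rot (v i) (uv i) = qv i & rot (v i) (qv i) = pv i].
Proof.
move=> /eqP h; have a := pv_adj i.
have r2 : rot (v i) (uv i) = qv i.
  have := nbr_v (rot_adj (uv_adj i)); case => // e.
    by move: (rot_neq2 a); rewrite h e eqxx.
  by move: (rot_neq1 (uv_adj i)); rewrite e eqxx.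
by split => //; rewrite -r2 -h rot3.
Qed.

Lemma typeA i : ~~ tB i ->
  [/\ rot (v i) (pv i) = qv i, rot (v i) (qv i) = uv i & rot (v i) (uv i) = pv i].
Proof.
move=> /eqP h; have a := pv_adj i.
have r1 : rot (v i) (pv i) = qv i.
  have := nbr_v (rot_adj a); case => // e.
  by move: (rot_neq1 a); rewrite e eqxx.
have r2 : rot (v i) (qv i) = uv i.
  have := nbr_v (rot_adj (qv_adj i)); case => // e.
    by move: (rot_neq2 a); rewrite r1 e eqxx.
  by move: (rot_neq1 (qv_adj i)); rewrite e eqxx.
by split => //; rewrite -r2 -r1 rot3.
Qed.

Local Notation same_side := (same_side adj rot v).

Lemma ss_iter n x : dart x -> same_side x (iter n fp x).
Proof.
move=> dx; elim: n => [|n IH]; first exact: connect0.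
apply: connect_trans IH (connect1 _) => /=.
by rewrite /side_step iter_fp_dart // fp_dart ?iter_fp_dart // eqxx.
Qed.

Lemma ss_fp d : dart d -> same_side d (fp d).
Proof. by move=> dd; apply: (ss_iter 1 dd). Qed.

Lemma ss_rv d : dart d -> ~~ on_cycle_edge v d.1 d.2 -> same_side d (rv d).
Proof.
move=> dd h; apply: connect1; rewrite /side_step dd rv_dart dd eqxx /=.
by rewrite h orbT.
Qed.

Lemma ss_step_sym d e : side_step adj rot v d e -> same_side e d.
Proof.
case/and3P => dd de /orP[/eqP ->|/andP[/eqP -> noce]].
  have := ss_iter (#|face_of rot d|).-1 (fp_dart dd).
  by rewrite -iterSr prednK ?face_pos // face_order.
case: d dd noce {de} => a b dd noce; apply: connect1; rewrite /side_step.
by rewrite -[(b, a)]/(rv (a, b)) rv_dart dd eqxx /= oce_sym noce orbT.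
Qed.

Lemma ss_sym d e : same_side d e -> same_side e d.
Proof.
move/connectP => [p pth ->]; elim: p d pth => [|x p IH] d /=; first by move=> _; exact: connect0.
case/andP => st pth; apply: connect_trans (IH _ pth) (ss_step_sym st).
Qed.

Lemma ss_trans d e f : same_side d e -> same_side e f -> same_side d f.
Proof. exact: connect_trans. Qed.

Lemma ss_off x y z : ~~ on_cycle v x -> adj x y -> adj x z -> same_side (x, y) (x, z).
Proof.
move=> xo xy xz; have [n <-] := rot_tr xy xz.
elim: n => [|n IH] /=; first exact: connect0.
set w := iter n (rot x) y; have xw : adj x w by apply: iter_rot_adj.
apply: ss_trans IH _.
apply: ss_trans (ss_rv _ _) _; first by rewrite inE.
  by rewrite /= oce_off.
by apply: ss_fp; rewrite inE /= adj_sym.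
Qed.

Lemma ss_nbr d i : has_nbr_in_side adj rot v d (v i) -> same_side d (uv i, v i).
Proof.
case=> y [ay /andP[yo /existsP[z /andP[yz ss]]]].
have ey : y = uv i.
  by case: (nbr_v ay) => // e; move: yo; rewrite e /pv /qv v_on.
subst y; apply: ss_trans ss (ss_off yo yz _).
by rewrite adj_sym uv_adj.
Qed.

Definition fwd i := (v i, qv i).
Definition bwd i := (qv i, v i).

Lemma qv_pred i : qv (ord_pred i) = v i.
Proof. by rewrite /qv ord_predK. Qed.

Lemma uv_rv i : same_side (v i, uv i) (uv i, v i).
Proof.
by apply: ss_rv; rewrite ?inE /= ?uv_adj // oce_sym oce_off // uv_off.
Qed.

Lemma u_side i : same_side (uv i, v i) (if tB i then fwd i else bwd (ord_pred i)).
Proof.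
have dd : dart (uv i, v i) by rewrite inE /= adj_sym uv_adj.
case: ifP => h.
  have [_ r2 _] := typeB h.
  by have := ss_fp dd; rewrite /faceperm /= r2.
have [_ _ r3] := typeA (negbT h).
by have := ss_fp dd; rewrite /faceperm /= r3 /bwd qv_pred.
Qed.

Lemma fwd_step i : same_side (fwd (ord_pred i)) (fwd i).
Proof.
have dd : dart (fwd (ord_pred i)) by rewrite inE /= qv_adj.
rewrite /fwd qv_pred.
have dd' : dart (pv i, v i) by rewrite inE /= adj_sym pv_adj.
case: (boolP (tB i)) => h.
  have [r1 r2 _] := typeB h.
  apply: ss_trans (ss_fp dd') _; rewrite /faceperm /= r1.
  apply: ss_trans (uv_rv i) _.
  have := ss_fp (_ : dart (uv i, v i)); rewrite /faceperm /= r2; apply.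
  by rewrite inE /= adj_sym uv_adj.
have [r1 _ _] := typeA h.
by have := ss_fp dd'; rewrite /faceperm /= r1.
Qed.

Lemma bwd_step i : same_side (bwd i) (bwd (ord_pred i)).
Proof.
rewrite /bwd qv_pred.
have dd' : dart (qv i, v i) by rewrite inE /= adj_sym qv_adj.
case: (boolP (tB i)) => h.
  have [_ _ r3] := typeB h.
  by have := ss_fp dd'; rewrite /faceperm /= r3.
have [_ r2 r3] := typeA h.
apply: ss_trans (ss_fp dd') _; rewrite /faceperm /= r2.
apply: ss_trans (uv_rv i) _.
have := ss_fp (_ : dart (uv i, v i)); rewrite /faceperm /= r3; apply.
by rewrite inE /= adj_sym uv_adj.
Qed.

Lemma iter_ordS_val n (i : 'I_k) : val (iter n (@ordS k) i) = ((i + n) %% k)%N.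
Proof.
elim: n => [|n IH] /=; first by rewrite addn0 modn_small.
by rewrite IH -addn1 modnDml addn1 addnS.
Qed.

Lemma iter_ordS_surj (i j : 'I_k) : exists n, iter n (@ordS k) i = j.
Proof.
exists (j + (k - i))%N; apply/val_inj; rewrite iter_ordS_val.
have := ltn_ord i; have := ltn_ord j => hj hi.
have -> : (i + (j + (k - i)) = j + k)%N by lia.
by rewrite modnDr modn_small.
Qed.

Lemma fwd_all i j : same_side (fwd i) (fwd j).
Proof.
have [n <-] := iter_ordS_surj i j.
elim: n => [|n IH] /=; first exact: connect0.
by apply: ss_trans IH _; have := fwd_step (ordS (iter n (@ordS k) i)); rewrite ordSK.
Qed.

Lemma bwd_all i j : same_side (bwd i) (bwd j).
Proof.
have [n <-] := iter_ordS_surj i j.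
elim: n => [|n IH] /=; first exact: connect0.
apply: ss_trans IH _; apply: ss_sym.
by have := bwd_step (ordS (iter n (@ordS k) i)); rewrite ordSK.
Qed.

Lemma fb_sep i j : ~~ same_side (fwd i) (bwd j).
Proof.
apply/negP => h; move: (jordan j); rewrite -/(fwd j) -/(bwd j) => /negP; apply.
apply: ss_trans (fwd_all j i) _; exact: h.
Qed.

Lemma side_of d i : has_nbr_in_side adj rot v d (v i) ->
  same_side d (if tB i then fwd i else bwd (ord_pred i)).
Proof. by move=> h; apply: ss_trans (ss_nbr h) (u_side i). Qed.

Lemma type_eq d i j : has_nbr_in_side adj rot v d (v i) ->
  has_nbr_in_side adj rot v d (v j) -> tB i = tB j.
Proof.
move=> /side_of hi /side_of hj; move: hi hj.
case: (tB i); case: (tB j) => // hi hj; exfalso.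
  move: (fb_sep i (ord_pred j)) => /negP; apply.
  by apply: ss_trans (ss_sym hi) hj.
move: (fb_sep j (ord_pred i)) => /negP; apply.
by apply: ss_trans (ss_sym hj) hi.
Qed.

Lemma type_sep d d' i j : has_nbr_in_side adj rot v d (v i) ->
  has_nbr_in_side adj rot v d' (v j) -> ~~ same_side d d' -> tB i != tB j.
Proof.
move=> /side_of hi /side_of hj nd; apply/negP => /eqP e; move: hi hj; rewrite e.
case: (tB j) => hi hj; move/negP: nd; apply.
  by apply: ss_trans hi (ss_trans (fwd_all _ _) (ss_sym hj)).
by apply: ss_trans hi (ss_trans (bwd_all _ _) (ss_sym hj)).
Qed.

Hypothesis fsz : forall d, dart d -> (#|face_of rot d| == 5) || (#|face_of rot d| == 6).

Lemma fst_verts d n : (iter n fp d).1 \in face_verts rot d.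
Proof. by apply: imset_f; apply: iter_face. Qed.

Lemma pent d : dart d -> d.1 \in centers s -> (iter 4 fp d).2 \in centers s ->
  #|face_of rot d| = 5.
Proof.
move=> dd c1 c2; case/orP: (fsz dd) => /eqP h //; exfalso.
have := face_order dd; rewrite h.
set x := iter 4 fp d.
have -> : iter 6 fp d = fp (fp x) by [].
have dx : dart (fp x) by apply: fp_dart; apply: iter_fp_dart.
move=> e; have e2 : (fp x).2 = d.1 by rewrite -e.
move: dx; rewrite inE e2 /= => a.
by move: (centers_nadj c2 c1); rewrite a.
Qed.

Lemma hex d : dart d -> (iter 5 fp d).1 != d.1 -> #|face_of rot d| = 6.
Proof.
move=> dd ne; case/orP: (fsz dd) => /eqP h //; exfalso.
by move: ne; have := face_order dd; rewrite h => ->; rewrite eqxx.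
Qed.

Lemma fsz56 d : dart d -> #|face_of rot d| = 5 \/ #|face_of rot d| = 6.
Proof. by move=> dd; case/orP: (fsz dd) => /eqP ->; [left|right]. Qed.

Lemma config a b ua ub pa :
  adj a ua -> adj a pa -> adj a b -> adj b ub ->
  ua \in centers s -> ub \in centers s -> a \notin centers s -> b \notin centers s ->
  rot a pa = ua -> rot a ua = b -> rot b a = ub ->
  (exists2 d, dart d & face_has_edge rot d a ua && face_has_edge rot d b ub) /\
  (forall d, dart d -> face_has_edge rot d a ua -> face_has_edge rot d b ub ->
     #|face_of rot d| = 6 /\
     exists2 e, e \in face_of rot d &
       (e.1 \in centers s) && ((iter 3 fp e).1 \in centers s)).
Proof.
move=> aua apa ab bub cua cub nca ncb r1 r2 r3.
set E := (ua, a).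
have dE : dart E by rewrite inE /= adj_sym.
have E1 : iter 1 fp E = (a, b) by rewrite /= /faceperm /= r2.
have E2 : iter 2 fp E = (b, ub) by rewrite /= -/(iter 1 fp E) E1 /faceperm /= r3.
have inE0 : E \in face_of rot E by rewrite -[E]/(iter 0 fp E) iter_face.
have inE2 : (b, ub) \in face_of rot E by rewrite -E2 iter_face.
have uab : ua != ub.
  apply/eqP => e.
  have h : (iter 3 fp E).1 = (iter 0 fp E).1.
    by rewrite -[iter 3 fp E]/(fp (iter 2 fp E)) E2 /= -e.
  by have := face_fst dE h; case: (fsz56 dE) => ->.
split.
  exists E => //; apply/andP; split; apply/orP; [right|left] => //.
move=> d dd h1 h2.
have eqF : face_of rot d = face_of rot E.
  case/orP: h1 => h1; last by rewrite (face_sym dd h1).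
  case/orP: h2 => h2.
    by rewrite -(face_sym dd h2) (face_sym dE inE2).
  exfalso.
  set D := (a, ua).
  have dD : dart D by rewrite inE.
  have FD : face_of rot D = face_of rot d by apply: face_sym.
  rewrite -FD in h2.
  set n := #|face_of rot D|.
  have [j0 hj0] := face_iterP h2.
  have hj : iter (j0 %% n)%N fp D = (ub, b) by rewrite -iter_mod.
  set j := (j0 %% n)%N in hj.
  have jn : (j < n)%N by rewrite ltn_mod face_pos.
  have n56 : n = 5 \/ n = 6 by apply: fsz56.
  have Dn : iter n.-1 fp D = (pa, a).
    have h : fp (iter n.-1 fp D) = fp (pa, a).
      rewrite -iterS prednK ?face_pos // face_order //.
      by rewrite /faceperm /= r1.
    by apply: fp_inj h; [exact: iter_fp_dart | rewrite inE /= adj_sym].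
  have D1 : (iter 1 fp D).1 = ua by [].
  have Hj1 : iter j.+1 fp D = (b, rot b ub) by rewrite iterS hj.
  have dI m : dart (iter m fp D) by apply: iter_fp_dart.
  have c0 : j != 0%N by apply/eqP => e; move: hj; rewrite e /= => -[e1 _]; move: nca; rewrite e1 cub.
  have c1 : j != 1%N.
    apply: contraNneq uab => e; move: hj; rewrite e => -[<- _]; by [].
  have c2 : j != 2%N.
    apply/eqP => e; move: hj; rewrite e /= -/(iter 1 fp D) => h.
    have : (iter 1 fp D).2 = ub by move: h; rewrite /faceperm; case.
    have := dI 1; rewrite inE D1 => a1 e1; rewrite e1 in a1.
    by move: (centers_nadj cua cub); rewrite a1.
  have c3 : j != 3%N.
    apply/eqP => e; move: hj; rewrite e /= -/(iter 2 fp D) => h.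
    have e2 : (iter 2 fp D).2 = ub by move: h; rewrite /faceperm; case.
    have a2 := dI 2; have a1 := dI 1.
    rewrite inE e2 in a2; rewrite inE D1 in a1.
    have e12 : (iter 2 fp D).1 = (iter 1 fp D).2 by [].
    rewrite e12 in a2.
    move/eqP: uab; apply; apply: (centers_common cua cub (y := (iter 1 fp D).2)) => //.
    by rewrite adj_sym.
  have c4 : j != n.-1.
    apply/eqP => e; move: hj; rewrite e Dn => -[_ ba].
    by move: ab; rewrite ba adj_irr.
  have c5 : j.+1 != n.-1.
    apply/eqP => e; move: Hj1; rewrite e Dn => -[pb _].
    by move: (rot_neq2 apa); rewrite r1 r2 pb eqxx.
  exact: (arith_j n56 jn c0 c1 c2 c3 c4 c5).
rewrite eqF; split; last first.
  exists E => //; rewrite cua /=.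
  by rewrite r2 r3.
case: (fsz56 dE) => // h5; exfalso.
have := face_order dE; rewrite h5 => h.
set y := (iter 3 fp E).2.
have dI m : dart (iter m fp E) by apply: iter_fp_dart.
have e3 : iter 3 fp E = (ub, y) by rewrite /y -[iter 3 fp E]/(fp (iter 2 fp E)) E2.
have a3 := dI 3; rewrite e3 inE /= in a3.
have e4 : (iter 4 fp E).1 = y by rewrite -[iter 4 fp E]/(fp (iter 3 fp E)) e3.
have e42 : (iter 4 fp E).2 = ua.
  by move: h; rewrite -[iter 5 fp E]/(fp (iter 4 fp E)) /faceperm; case.
have a4 := dI 4; rewrite inE e4 e42 in a4.
move/eqP: uab; apply; apply: (centers_common cua cub (y := y)) => //.
by rewrite adj_sym.
Qed.

Lemma pv_S x : pv (ordS x) = v x. Proof. by rewrite /pv ordSK. Qed.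

Lemma fpA_p x : ~~ tB x -> fp (pv x, v x) = (v x, qv x).
Proof. by case/typeA => r1 _ _; rewrite /faceperm /= r1. Qed.
Lemma fpA_q x : ~~ tB x -> fp (qv x, v x) = (v x, uv x).
Proof. by case/typeA => _ r2 _; rewrite /faceperm /= r2. Qed.
Lemma fpA_u x : ~~ tB x -> fp (uv x, v x) = (v x, pv x).
Proof. by case/typeA => _ _ r3; rewrite /faceperm /= r3. Qed.
Lemma fpB_p x : tB x -> fp (pv x, v x) = (v x, uv x).
Proof. by case/typeB => r1 _ _; rewrite /faceperm /= r1. Qed.
Lemma fpB_u x : tB x -> fp (uv x, v x) = (v x, qv x).
Proof. by case/typeB => _ r2 _; rewrite /faceperm /= r2. Qed.
Lemma fpB_q x : tB x -> fp (qv x, v x) = (v x, pv x).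
Proof. by case/typeB => _ _ r3; rewrite /faceperm /= r3. Qed.

Lemma udart x : dart (uv x, v x).
Proof. by rewrite inE /= adj_sym uv_adj. Qed.

Lemma main_i d1 d2 i :
  ~~ same_side d1 d2 ->
  has_nbr_in_side adj rot v d1 (v i) ->
  has_nbr_in_side adj rot v d1 (v (ordS i)) ->
  has_nbr_in_side adj rot v d2 (v (ord_pred i)) ->
  has_nbr_in_side adj rot v d2 (v (ordS (ordS i))) ->
  exists2 d, d \in darts adj &
    #|face_of rot d| = 5 /\
    {subset [:: v (ord_pred i); v i; v (ordS i); v (ordS (ordS i))]
       <= face_verts rot d}.
Proof.
move=> nss h1 h2 h3 h4.
have e1 := type_eq h1 h2; have e2 := type_eq h3 h4.
have ne := type_sep h1 h3 nss.
case: (boolP (tB i)) => hi.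
  have hJ : tB (ordS i) by rewrite -e1.
  have hM : ~~ tB (ord_pred i) by move: ne; rewrite hi; case: (tB _).
  have hL : ~~ tB (ordS (ordS i)) by rewrite -e2.
  set d := (uv (ordS (ordS i)), v (ordS (ordS i))).
  have s1 : fp d = (v (ordS (ordS i)), v (ordS i)) by rewrite /d fpA_u // pv_S.
  have s2 : fp (v (ordS (ordS i)), v (ordS i)) = (v (ordS i), v i).
    by rewrite -/(qv (ordS i)) fpB_q // pv_S.
  have s3 : fp (v (ordS i), v i) = (v i, v (ord_pred i)).
    by rewrite -/(qv i) fpB_q.
  have s4 := fpA_q hM; rewrite qv_pred in s4.
  have dd : dart d by apply: udart.
  exists d => //; split.
    apply: pent => //; first exact: uv_c.
  by rewrite -[iter 4 fp d]/(fp (fp (fp (fp d)))) s1 s2 s3 s4; apply: uv_c.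
  move=> x; rewrite !inE => /or4P[] /eqP ->.
  - by have := fst_verts d 4; rewrite -[iter 4 fp d]/(fp (fp (fp (fp (d))))) s1 s2 s3 s4.
  - by have := fst_verts d 3; rewrite -[iter 3 fp d]/(fp (fp (fp (d)))) s1 s2 s3.
  - by have := fst_verts d 2; rewrite -[iter 2 fp d]/(fp (fp (d))) s1 s2.
  - by have := fst_verts d 1; rewrite -[iter 1 fp d]/(fp (d)) s1.
have hJ : ~~ tB (ordS i) by rewrite -e1.
have hM : tB (ord_pred i) by move: ne; rewrite (negbTE hi); case: (tB _).
have hL : tB (ordS (ordS i)) by rewrite -e2.
set d := (uv (ord_pred i), v (ord_pred i)).
have s1 : fp d = (v (ord_pred i), v i) by rewrite /d fpB_u // qv_pred.
have s2 : fp (v (ord_pred i), v i) = (v i, v (ordS i)) by rewrite -/(pv i) fpA_p.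
have s3 := fpA_p hJ; rewrite pv_S in s3.
have s4 := fpB_p hL; rewrite pv_S in s4.
have dd : dart d by apply: udart.
exists d => //; split.
  apply: pent => //; first exact: uv_c.
  by rewrite -[iter 4 fp d]/(fp (fp (fp (fp d)))) s1 s2 s3 s4; apply: uv_c.
move=> x; rewrite !inE => /or4P[] /eqP ->.
- by have := fst_verts d 1; rewrite -[iter 1 fp d]/(fp (d)) s1.
- by have := fst_verts d 2; rewrite -[iter 2 fp d]/(fp (fp (d))) s1 s2.
- by have := fst_verts d 3; rewrite -[iter 3 fp d]/(fp (fp (fp (d)))) s1 s2 s3.
- by have := fst_verts d 4; rewrite -[iter 4 fp d]/(fp (fp (fp (fp (d))))) s1 s2 s3 s4.
Qed.

Lemma main_ii d1 d2 i :
  ~~ same_side d1 d2 ->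
  has_nbr_in_side adj rot v d1 (v i) ->
  has_nbr_in_side adj rot v d1 (v (ordS i)) ->
  has_nbr_in_side adj rot v d1 (v (ordS (ordS i))) ->
  has_nbr_in_side adj rot v d2 (v (ord_pred i)) ->
  has_nbr_in_side adj rot v d2 (v (ordS (ordS (ordS i)))) ->
  exists2 d, d \in darts adj &
    #|face_of rot d| = 6 /\
    {subset [:: v (ord_pred i); v i; v (ordS i); v (ordS (ordS i));
                v (ordS (ordS (ordS i)))] <= face_verts rot d}.
Proof.
move=> nss h1 h2 h3 h4 h5.
have e1 := type_eq h1 h2; have e1' := type_eq h1 h3; have e2 := type_eq h4 h5.
have ne := type_sep h1 h4 nss.
set J := ordS i; set L := ordS J; set R := ordS L; set M := ord_pred i.
case: (boolP (tB i)) => hi.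
  have hJ : tB J by rewrite -e1.
  have hL : tB L by rewrite -e1'.
  have hM : ~~ tB M by move: ne; rewrite hi; case: (tB _).
  have hR : ~~ tB R by rewrite -e2.
  set d := (uv R, v R).
  have s1 : fp d = (v R, v L) by rewrite /d fpA_u // pv_S.
  have s2 : fp (v R, v L) = (v L, v J) by rewrite -/(qv L) fpB_q // pv_S.
  have s3 : fp (v L, v J) = (v J, v i) by rewrite -/(qv J) fpB_q // pv_S.
  have s4 : fp (v J, v i) = (v i, v M) by rewrite -/(qv i) fpB_q.
  have s5 := fpA_q hM; rewrite qv_pred in s5.
  have dd : dart d by apply: udart.
  exists d => //; split.
    apply: hex => //.
    by rewrite -[iter 5 fp d]/(fp (fp (fp (fp (fp d))))) s1 s2 s3 s4 s5 /= eq_sym uv_neq.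
  move=> x; rewrite !inE => /or4P[| | |/orP[]] /eqP ->.
  - by have := fst_verts d 5; rewrite -[iter 5 fp d]/(fp (fp (fp (fp (fp d))))) s1 s2 s3 s4 s5.
  - by have := fst_verts d 4; rewrite -[iter 4 fp d]/(fp (fp (fp (fp d)))) s1 s2 s3 s4.
  - by have := fst_verts d 3; rewrite -[iter 3 fp d]/(fp (fp (fp d))) s1 s2 s3.
  - by have := fst_verts d 2; rewrite -[iter 2 fp d]/(fp (fp d)) s1 s2.
  - by have := fst_verts d 1; rewrite -[iter 1 fp d]/(fp d) s1.
have hJ : ~~ tB J by rewrite -e1.
have hL : ~~ tB L by rewrite -e1'.
have hM : tB M by move: ne; rewrite (negbTE hi); case: (tB _).
have hR : tB R by rewrite -e2.
set d := (uv M, v M).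
have s1 : fp d = (v M, v i) by rewrite /d fpB_u // qv_pred.
have s2 : fp (v M, v i) = (v i, v J) by rewrite -/(pv i) fpA_p.
have s3 := fpA_p hJ; rewrite pv_S in s3.
have s4 := fpA_p hL; rewrite pv_S in s4.
have s5 := fpB_p hR; rewrite pv_S in s5.
have dd : dart d by apply: udart.
exists d => //; split.
  apply: hex => //.
  by rewrite -[iter 5 fp d]/(fp (fp (fp (fp (fp d))))) s1 s2 s3 s4 s5 /d /= eq_sym uv_neq.
move=> x; rewrite !inE => /or4P[| | |/orP[]] /eqP ->.
- by have := fst_verts d 1; rewrite -[iter 1 fp d]/(fp d) s1.
- by have := fst_verts d 2; rewrite -[iter 2 fp d]/(fp (fp d)) s1 s2.
- by have := fst_verts d 3; rewrite -[iter 3 fp d]/(fp (fp (fp d))) s1 s2 s3.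
- by have := fst_verts d 4; rewrite -[iter 4 fp d]/(fp (fp (fp (fp d)))) s1 s2 s3 s4.
- by have := fst_verts d 5; rewrite -[iter 5 fp d]/(fp (fp (fp (fp (fp d))))) s1 s2 s3 s4 s5.
Qed.

Lemma off_nbr i u : adj (v i) u -> ~~ on_cycle_edge v (v i) u -> u = uv i.
Proof.
move=> au nu; case: (nbr_v au) => // e; move: nu; rewrite e oce_v.
  by rewrite eqxx orbT.
by rewrite eqxx.
Qed.

Lemma main_iii d0' i u u' :
  has_nbr_in_side adj rot v d0' (v i) ->
  has_nbr_in_side adj rot v d0' (v (ordS i)) ->
  adj (v i) u -> ~~ on_cycle_edge v (v i) u ->
  adj (v (ordS i)) u' -> ~~ on_cycle_edge v (v (ordS i)) u' ->
  (exists2 d, d \in darts adj &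
     face_has_edge rot d (v i) u && face_has_edge rot d (v (ordS i)) u') /\
  (forall d, d \in darts adj ->
     face_has_edge rot d (v i) u -> face_has_edge rot d (v (ordS i)) u' ->
     #|face_of rot d| = 6 /\
     exists2 e, e \in face_of rot d &
       (e.1 \in centers s) && ((iter 3 fp e).1 \in centers s)).
Proof.
move=> h1 h2 au nu au' nu'.
rewrite (off_nbr au nu) (off_nbr au' nu').
have e := type_eq h1 h2.
case: (boolP (tB i)) => hi.
  have hJ : tB (ordS i) by rewrite -e.
  have [r1 r2 _] := typeB hi.
  have [r3 _ _] := typeB hJ; rewrite pv_S in r3.
  exact: (config (uv_adj i) (pv_adj i) (qv_adj i) (uv_adj _) (uv_c i) (uv_c _)
                 (noc i) (noc _) r1 r2 r3).
have hJ : ~~ tB (ordS i) by rewrite -e.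
have [_ r3 _] := typeA hi.
have [_ r1 r2] := typeA hJ; rewrite pv_S in r2.
have aJi : adj (v (ordS i)) (v i) by have := pv_adj (ordS i); rewrite pv_S.
have [c1 c2] := config (uv_adj _) (qv_adj _) aJi (uv_adj i) (uv_c _) (uv_c i)
                 (noc _) (noc i) r1 r2 r3.
split.
  by case: c1 => d dd h; exists d => //; rewrite andbC.
by move=> d dd ha hb; apply: c2.
Qed.

End Jordan.

Unset Implicit Arguments.

Theorem mainTheorem9 (T : finType) (adj : rel T) (rot : T -> T -> T)
    (s : rel T) (k : nat) (v : 'I_k -> T) :
  fullerene adj rot ->
  perfect_star_packing adj s ->
  is_cycle adj v ->
  (forall i, v i \notin centers s) ->
  non_facial adj rot v ->
  (* d1, d2 : darts on the two (distinct) sides H_1, H_2 of C (either order) *)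
  (forall d1 d2 : T * T, d1 \in darts adj -> d2 \in darts adj ->
     ~~ same_side adj rot v d1 d2 ->
     forall i : 'I_k,
       (* (i) *)
       (has_nbr_in_side adj rot v d1 (v i) ->
        has_nbr_in_side adj rot v d1 (v (ordS i)) ->
        has_nbr_in_side adj rot v d2 (v (ord_pred i)) ->
        has_nbr_in_side adj rot v d2 (v (ordS (ordS i))) ->
        exists2 d, d \in darts adj &
          #|face_of rot d| = 5 /\
          {subset [:: v (ord_pred i); v i; v (ordS i); v (ordS (ordS i))]
             <= face_verts rot d}) /\
       (* (ii) *)
       (has_nbr_in_side adj rot v d1 (v i) ->
        has_nbr_in_side adj rot v d1 (v (ordS i)) ->
        has_nbr_in_side adj rot v d1 (v (ordS (ordS i))) ->
        has_nbr_in_side adj rot v d2 (v (ord_pred i)) ->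
        has_nbr_in_side adj rot v d2 (v (ordS (ordS (ordS i)))) ->
        exists2 d, d \in darts adj &
          #|face_of rot d| = 6 /\
          {subset [:: v (ord_pred i); v i; v (ordS i); v (ordS (ordS i));
                      v (ordS (ordS (ordS i)))] <= face_verts rot d})) /\
  (* (iii) : d0 is a dart on the side H_j *)
  (forall d0 : T * T, d0 \in darts adj ->
     forall (i : 'I_k) (u u' : T),
       has_nbr_in_side adj rot v d0 (v i) ->
       has_nbr_in_side adj rot v d0 (v (ordS i)) ->
       (* e_i = v_i u and e_{i+1} = v_{i+1} u' are the edges not on C *)
       adj (v i) u -> ~~ on_cycle_edge v (v i) u ->
       adj (v (ordS i)) u' -> ~~ on_cycle_edge v (v (ordS i)) u' ->
       (exists2 d, d \in darts adj &
          face_has_edge rot d (v i) u && face_has_edge rot d (v (ordS i)) u') /\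
       (forall d, d \in darts adj ->
          face_has_edge rot d (v i) u -> face_has_edge rot d (v (ordS i)) u' ->
          #|face_of rot d| = 6 /\
          exists2 e, e \in face_of rot d &
            (e.1 \in centers s) && ((iter 3 (faceperm rot) e).1 \in centers s))).
Proof.
move=> [[irr sym deg conn [rot_adj rot_inj rot_tr]] [euler fsz fv]] psp cyc noc _.
have dv : forall i : 'I_k, (v i, v (ordS i)) \in darts adj.
  by move=> i; rewrite inE /=; case: cyc => _ _ ->.
split.
  move=> d1 d2 _ _ nss i; split.
    move=> h1 h2 h3 h4.
    have := dv i => d0d.
    by eapply main_i; eauto.
  move=> h1 h2 h3 h4 h5.
  have := dv i => d0d.
  by eapply main_ii; eauto.
move=> d0 _ i u u' h1 h2 au nu au' nu'.
have := dv i => d0d.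
by eapply main_iii; eauto.
Qed.
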